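(* For any $j,j'\in\mathsf{R}'$, $j\ne j'$ implies $\mathrm{efull}(j)\ne\mathrm{efull}(j')$.
   Context: $T\in[0\mathinner{.\,.}\sigma)^n$ with $2\le\sigma<n^{1/7}$; $\tau=\lfloor\mu\log_\sigma n\rfloor$ for a fixed positive constant $\mu<1/6$ with $\tau\ge1$. $\mathrm{per}(S)$ is the shortest period of $S$. $\mathsf{R}=\{i\in[1\mathinner{.\,.}n-3\tau+2]:\mathrm{per}(T[i\mathinner{.\,.}i+3\tau-2])\le\tau/3\}$ and $\mathsf{R}'=\{j\in\mathsf{R}:j-1\notin\mathsf{R}\}$. For $j\in\mathsf{R}$: $\mathrm{end}(j)=\min\{j'\ge j:j'\notin\mathsf{R}\}+3\tau-2$; with $p=\mathrm{per}(T[j\mathinner{.\,.}j+3\tau-1))$, $\mathrm{Lroot}(j)=\min\{T[j+t\mathinner{.\,.}j+t+p):t\in[0\mathinner{.\,.}p)\}$ (lexicographic minimum); with $H=\mathrm{Lroot}(j)$, $T[j\mathinner{.\,.}\mathrm{end}(j))$ is uniquely written as $H'H^kH''$ with $H'$ a proper suffix and $H''$ a proper prefix of $H$, $\mathrm{Ltail}(j)=|H''|$, and $\mathrm{efull}(j)=\mathrm{end}(j)-\mathrm{Ltail}(j)$. *)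

(* Defs.v *)
From mathcomp Require Import all_boot.
Set Implicit Arguments. Unset Strict Implicit. Unset Printing Implicit Defensive.

(* Strings are [seq nat]; positions are 1-based as in the paper:
   T[i] = nth 0 T i.-1. *)

Definition sub (T : seq nat) (i l : nat) : seq nat := take l (drop i.-1 T).

Definition is_period (S : seq nat) (p : nat) : bool :=
  (0 < p) && all (fun k => nth 0 S k == nth 0 S (k + p)) (iota 0 (size S - p)).

(* per S = shortest period of S (|S| is always a period of a nonempty S). *)
Definition per (S : seq nat) : nat :=
  nth (size S) [seq p <- iota 1 (size S) | is_period S p] 0.

Section Runs.
Variables (T : seq nat) (tau : nat).
Let n := size T.

Definition inR (i : nat) : bool :=
  (1 <= i) && (i <= n + 2 - 3 * tau) && (3 * per (sub T i (3 * tau - 1)) <= tau).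

Definition inR' (j : nat) : bool := inR j && ~~ inR j.-1.

(* min { j' >= j : j' notin R }  (R is contained in [1..n], so the search
   over offsets 0..n+1 always succeeds; find returns the least offset). *)
Definition firstOut (j : nat) : nat :=
  j + find (fun k => ~~ inR (j + k)) (iota 0 n.+2).

Definition endp (j : nat) : nat := firstOut j + 3 * tau - 2.

Fixpoint lexle (s t : seq nat) : bool :=
  match s, t with
  | [::], _ => true
  | _ :: _, [::] => false
  | x :: s', y :: t' => (x < y) || ((x == y) && lexle s' t')
  end.

Definition lexmin (x0 : seq nat) (l : seq (seq nat)) : seq nat :=
  foldl (fun best c => if lexle c best then c else best) x0 l.

Definition rperiod (j : nat) : nat := per (sub T j (3 * tau - 1)).

Definition Lroot (j : nat) : seq nat :=
  let p := rperiod j in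
  lexmin (sub T j p) [seq sub T (j + t) p | t <- iota 0 p].

(* S = H' H^k H'' with H' a proper suffix of H (|H'| = a < |H|) and
   H'' a proper prefix of H (|H''| = b < |H|). *)
Definition decomp (S H : seq nat) (b : nat) : bool :=
  (b < size H) &&
  has (fun a => has (fun k =>
         S == drop (size H - a) H ++ flatten (nseq k H) ++ take b H)
       (iota 0 (size S).+1))
    (iota 0 (size H)).

(* Ltail(j) = |H''| in the (unique) decomposition of T[j .. end(j)). *)
Definition Ltail (j : nat) : nat :=
  let H := Lroot j in
  let S := sub T j (endp j - j) in
  find (decomp S H) (iota 0 (size H)).

Definition efull (j : nat) : nat := endp j - Ltail j.

End Runs.

(* Main.v *)
Require Import Defs.
From mathcomp Require Import all_boot.
From Stdlib Require Import Reals.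
From mathcomp Require Import zify.
Set Implicit Arguments. Unset Strict Implicit.

Definition hasper (T : seq nat) (a b p : nat) : Prop :=
  forall i, a <= i -> i + p < b -> nth 0 T i = nth 0 T (i + p).

Lemma hasper_sub T a b p a' b' : hasper T a b p -> a <= a' -> b' <= b -> hasper T a' b' p.
Proof. move=> H h1 h2 i hi1 hi2; apply: H; lia. Qed.

Lemma hasper_mul T a b g k x : hasper T a b g -> a <= x -> x + k * g < b ->
  nth 0 T x = nth 0 T (x + k * g).
Proof.
move=> H; elim: k => [|k IH] hx hb; first by rewrite mul0n addn0.
rewrite IH //; last lia.
have -> : x + k.+1 * g = (x + k * g) + g by rewrite mulSn; lia.
apply: H; lia.
Qed.

Lemma hasper_diff T a b p q : hasper T a b p -> hasper T a b q -> p < q ->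
  a + p + q <= b -> hasper T a b (q - p).
Proof.
move=> Hp Hq lt hb i hi1 hi2.
case: (leqP (a + p) i) => h.
- have e1 := Hp (i - p); have e2 := Hq (i - p).
  have -> : i = i - p + p by lia.
  rewrite -e1; try lia. rewrite e2; try lia. f_equal; lia.
- have e1 := Hq i; have e2 := Hp (i + (q - p)).
  rewrite e1; try lia. rewrite e2; try lia. f_equal; lia.
Qed.

Lemma fine_wilf T a b : forall s p q, p + q <= s -> 0 < p -> 0 < q ->
  hasper T a b p -> hasper T a b q -> a + p + q <= b -> hasper T a b (gcdn p q).
Proof.
elim=> [|s IH] p q hs hp hq Hp Hq hb; first lia.
case: (ltngtP p q) => h.
- have H' := hasper_diff Hp Hq h hb.
  have -> : gcdn p q = gcdn p (q - p).
    by rewrite -{1}(subnK (ltnW h)) gcdnDr.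
  apply: IH => //; lia.
- have H' := hasper_diff Hq Hp h (ltac:(lia)).
  have -> : gcdn p q = gcdn q (p - q).
    by rewrite gcdnC -{1}(subnK (ltnW h)) gcdnDr.
  apply: IH => //; lia.
- by subst; rewrite gcdnn.
Qed.

Lemma hasper_ext T a b p g k : hasper T a b p -> p = k * g -> 0 < g -> 0 < p ->
  forall d c' b', hasper T c' b' g -> a <= c' -> b' <= b -> c' + p <= b' ->
  (c' - a) + (b - b') <= d -> hasper T a b g.
Proof.
move=> Hp pk g0 p0.
case: k pk => [|k] pk; first by rewrite mul0n in pk; lia.
rewrite mulSn in pk. subst p.
elim=> [|d IH] c' b' Hg h1 h2 h3 hd.
  have ec : c' = a by lia. have eb : b' = b by lia. by subst.
case: (ltnP a c') => hc.
- apply: (IH (c'.-1) b') => //; try lia.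
  move=> i hi1 hi2.
  case: (leqP c' i) => hi; first by apply: Hg; lia.
  have ei : i = c'.-1 by lia. subst i.
  have e1 := Hp c'.-1.
  have e2 := hasper_mul (k := k) (x := c'.-1 + g) Hg.
  rewrite e1; try lia. rewrite e2; try lia. f_equal. lia.
- have ec : c' = a by lia. subst c'.
  case: (ltnP b' b) => hb; last by have -> : b = b' by lia.
  apply: (IH a b'.+1) => //; try lia.
  move=> i hi1 hi2.
  case: (ltnP (i + g) b') => hi; first by apply: Hg; lia.
  have ei : i = b' - g by lia. subst i.
  have e1 := Hp (b' - (g + k * g)).
  have e2 := hasper_mul (k := k) (x := b' - (g + k * g)) Hg.
  have -> : b' - g + g = b' by lia.
  have -> : b' = b' - (g + k * g) + (g + k * g) by lia.
  rewrite -e1; try lia. rewrite e2; try lia.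
  f_equal. lia.
Qed.

Lemma hasper_glue T a b c d g : hasper T a b g -> hasper T c d g -> a <= c ->
  c + g <= b -> b <= d -> hasper T a d g.
Proof.
move=> H1 H2 h1 h2 h3 i hi1 hi2.
case: (ltnP (i + g) b) => h; first by apply: H1.
apply: H2; lia.
Qed.

Lemma merge T a b c d p q : hasper T a b p -> hasper T c d q -> a <= c ->
  c + p + q <= b -> b <= d -> 0 < p -> 0 < q -> hasper T a d (gcdn p q).
Proof.
move=> Hp Hq h1 h2 h3 p0 q0.
have g0 : 0 < gcdn p q by rewrite gcdn_gt0 p0.
have HO : hasper T c b (gcdn p q).
  apply: (fine_wilf (s := p + q)) => //.
  - apply: (hasper_sub Hp); lia.
  - apply: (hasper_sub Hq); lia.
have HX : hasper T a b (gcdn p q).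
  apply: (hasper_ext (k := p %/ gcdn p q) Hp _ g0 p0 (d := (c - a) + (b - b)) HO) => //; try lia.
  by rewrite divnK // dvdn_gcdl.
have HY : hasper T c d (gcdn p q).
  apply: (hasper_ext (k := q %/ gcdn p q) Hq _ g0 q0 (d := (c - c) + (d - b)) HO) => //; try lia.
  by rewrite divnK // dvdn_gcdr.
apply: (hasper_glue HX HY) => //.
have : gcdn p q <= p by apply: dvdn_leq => //; apply: dvdn_gcdl.
lia.
Qed.

Lemma nth_sub T i L k : k < L -> nth 0 (sub T i L) k = nth 0 T (i.-1 + k).
Proof. by move=> h; rewrite /sub nth_take // nth_drop. Qed.

Lemma size_sub T i L : i.-1 + L <= size T -> size (sub T i L) = L.
Proof. move=> h; rewrite /sub size_takel // size_drop; lia. Qed.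

Lemma is_period_hasper T i L p : i.-1 + L <= size T ->
  is_period (sub T i L) p -> hasper T i.-1 (i.-1 + L) p.
Proof.
move=> hs /andP [p0 /allP H] x h1 h2.
have := H (x - i.-1); rewrite mem_iota size_sub // => /(_ ltac:(lia)) /eqP.
rewrite !nth_sub; try lia.
have -> : i.-1 + (x - i.-1) = x by lia.
by have -> : i.-1 + (x - i.-1 + p) = x + p by lia.
Qed.

Lemma hasper_is_period T i L p : i.-1 + L <= size T -> 0 < p ->
  hasper T i.-1 (i.-1 + L) p -> is_period (sub T i L) p.
Proof.
move=> hs p0 H; apply/andP; split => //; apply/allP => k.
rewrite mem_iota size_sub // => hk.
rewrite !nth_sub; try lia.
apply/eqP; rewrite addnA; apply: H; lia.
Qed.

Lemma filter_iota_head (P : pred nat) m k x d : x \in filter P (iota m k) ->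
  nth d (filter P (iota m k)) 0 <= x.
Proof.
elim: k m => [|k IH] m //=.
case: (P m) => /=.
- rewrite inE => /orP [/eqP -> //|]; rewrite mem_filter mem_iota => /andP [_]; lia.
- by apply: IH.
Qed.

Lemma per_period S : 0 < size S -> is_period S (per S).
Proof.
move=> h; rewrite /per.
have hin : size S \in [seq p <- iota 1 (size S) | is_period S p].
  rewrite mem_filter mem_iota; apply/andP; split; last lia.
  apply/andP; split => //; apply/allP => k; by rewrite subnn.
have : nth (size S) [seq p <- iota 1 (size S) | is_period S p] 0
  \in [seq p <- iota 1 (size S) | is_period S p].
  apply: mem_nth; case: (filter _ _) hin => //.
by rewrite mem_filter => /andP [].
Qed.

Lemma per_min S g : is_period S g -> g <= size S -> per S <= g.
Proof.
move=> hg hs; apply: filter_iota_head.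
rewrite mem_filter hg mem_iota /=; move: hg => /andP [g0 _]; lia.
Qed.

Lemma size_sub_le T i L : size (sub T i L) <= L.
Proof. rewrite /sub size_take_min; lia. Qed.

Lemma lexmin_size p x0 l : size x0 <= p -> all (fun s : seq nat => size s <= p) l ->
  size (lexmin x0 l) <= p.
Proof.
rewrite /lexmin; elim: l x0 => //= c l IH x0 h /andP [hc hl].
by apply: IH => //; case: ifP.
Qed.

Lemma Ltail_le T tau j : Ltail T tau j <= rperiod T tau j.
Proof.
rewrite /Ltail; apply: leq_trans (find_size _ _) _; rewrite size_iota.
rewrite /Lroot; apply: lexmin_size; first exact: size_sub_le.
by apply/allP => s /mapP [t _ ->]; apply: size_sub_le.
Qed.

Lemma inR_window T tau i : 1 <= tau -> inR T tau i ->
  exists p, [/\ 0 < p, 3 * p <= tau & hasper T i.-1 (i.-1 + (3 * tau - 1)) p].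
Proof.
move=> t1 /andP [/andP [h1 h2] h3].
have hs : i.-1 + (3 * tau - 1) <= size T by lia.
have hp := per_period (ltac:(rewrite size_sub //; lia) : 0 < size (sub T i (3 * tau - 1))).
exists (per (sub T i (3 * tau - 1))); split => //.
- by case/andP: hp.
- exact: is_period_hasper.
Qed.

Lemma window_inR T tau i g : 1 <= tau -> 1 <= i -> i <= size T + 2 - 3 * tau ->
  0 < g -> 3 * g <= tau -> hasper T i.-1 (i.-1 + (3 * tau - 1)) g -> inR T tau i.
Proof.
move=> t1 h1 h2 g0 g3 H.
have hs : i.-1 + (3 * tau - 1) <= size T by lia.
have hp := hasper_is_period hs g0 H.
have := per_min hp (ltac:(rewrite size_sub //; lia)).
rewrite /inR h1 h2 /=; lia.
Qed.

Lemma firstOut_in T tau j k : j <= k -> k < firstOut T tau j -> inR T tau k.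
Proof.
rewrite /firstOut => h1 h2.
have hf := find_size (fun k => ~~ inR T tau (j + k)) (iota 0 (size T).+2).
rewrite size_iota in hf.
have := before_find 0 (ltac:(lia) : k - j < find (fun k => ~~ inR T tau (j + k)) (iota 0 (size T).+2)).
rewrite nth_iota; last lia.
have -> : j + (0 + (k - j)) = k by lia.
by move/negbFE.
Qed.

Lemma firstOut_gt T tau j : inR T tau j -> j < firstOut T tau j.
Proof. by rewrite /firstOut /= addn0 => ->; rewrite /=; lia. Qed.

Lemma firstOut_le T tau j x : j <= x -> ~~ inR T tau x -> x < j + (size T).+2 ->
  firstOut T tau j <= x.
Proof.
move=> h1 h2 h3; case: (leqP (firstOut T tau j) x) => // h.
by rewrite (firstOut_in h1 h) in h2.
Qed.

Lemma block_per T tau j : 1 <= tau -> inR T tau j -> forall r, j + r < firstOut T tau j ->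
  exists g, [/\ 0 < g, 3 * g <= tau & hasper T j.-1 ((j + r).-1 + (3 * tau - 1)) g].
Proof.
move=> t1 hj; elim=> [|r IH] hr.
  by rewrite addn0; apply: inR_window.
have [g [g0 g3 Hg]] := IH (ltac:(lia)).
have hk : inR T tau (j + r.+1) by apply: firstOut_in hr; lia.
have [p [p0 p3 Hp]] := inR_window t1 hk.
exists (gcdn g p); split.
- by rewrite gcdn_gt0 g0.
- have : gcdn g p <= g by apply: dvdn_leq => //; apply: dvdn_gcdl.
  lia.
- move: hj => /andP [/andP [h1 _] _].
  apply: (merge Hg Hp); lia.
Qed.

Lemma main_lt T tau j j' : 1 <= tau -> inR' T tau j -> inR' T tau j' -> j < j' ->
  efull T tau j <> efull T tau j'.
Proof.
move=> t1 /andP [hj _] /andP [hj' nj'] jj E.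
have hjb := hj; have hjb' := hj'.
move: hjb hjb' => /andP [/andP [a1 a2] a3] /andP [/andP [b1 b2] b3].
have hf : firstOut T tau j <= j'.-1 by apply: firstOut_le => //; lia.
have hf1 := firstOut_gt hj.
have hf' := firstOut_gt hj'.
have [g1 [g10 g13 H1]] : exists g, [/\ 0 < g, 3 * g <= tau & hasper T j.-1 ((j + (firstOut T tau j - 1 - j)).-1 + (3 * tau - 1)) g] by apply: block_per => //; lia.
have [g2 [g20 g23 H2]] : exists g, [/\ 0 < g, 3 * g <= tau & hasper T j'.-1 ((j' + (firstOut T tau j' - 1 - j')).-1 + (3 * tau - 1)) g] by apply: block_per => //; lia.
have L1 := Ltail_le T tau j; have L2 := Ltail_le T tau j'.
move: E; rewrite /efull /endp => E.
rewrite /rperiod in L1 L2.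
have H := merge H1 H2 _ _ _ g10 g20.
have {}H := H ltac:(lia) ltac:(lia) ltac:(lia). clear E L1 L2 H1 H2 a3 b3.
have hg : gcdn g1 g2 <= g1 by apply: dvdn_leq => //; apply: dvdn_gcdl.
have : inR T tau j'.-1.
  apply: (window_inR (g := gcdn g1 g2)) => //; try lia.
  - by rewrite gcdn_gt0 g10.
  - apply: (hasper_sub H); lia.
by rewrite (negbTE nj').
Qed.

Theorem lemma5p14 (sigma : nat) (T : seq nat) (mu : R) (tau : nat) :
  all (fun c => c < sigma) T ->
  2 <= sigma ->
  (INR sigma < Rpower (INR (size T)) (1 / 7))%R ->
  (0 < mu)%R -> (mu < 1 / 6)%R ->
  Z.of_nat tau = Int_part (mu * (ln (INR (size T)) / ln (INR sigma)))%R ->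
  1 <= tau ->
  forall j j' : nat, inR' T tau j -> inR' T tau j' -> j <> j' ->
    efull T tau j <> efull T tau j'.
Proof.
move=> _ _ _ _ _ _ t1 j j' hj hj' ne.
case: (ltngtP j j') => h.
- exact: main_lt.
- by move=> E; apply: (main_lt t1 hj' hj h); rewrite E.
- by [].
Qed.
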